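(* Let $c\ge0$, let $\rho:[0,\infty)\to[0,\infty)$ be non-decreasing and differentiable, and let $f,g:[0,\infty)\to[0,\infty)$ be Borel measurable and such that $$\Delta:=\sup_{r\ge r_0}\rho\Big(\int_{r_0}^r g(u)du+c\Big)^{1+\beta}\int_r^\infty f(u)du<\infty$$ for some $r_0\ge0$ and $\beta\ge0$. Then: (i) if $\beta>0$, for all $r\ge r_0$, $$\int_r^\infty\rho\Big(\int_{r_0}^u g(v)dv+c\Big)f(u)du\le\frac{\Delta(1+\beta)}{\beta}\rho\Big(\int_{r_0}^r g(u)du+c\Big)^{-\beta};$$ (ii) if $\beta=0$ and either $\int_{r_0}^\infty g(r)dr<\infty$ or $\rho$ is bounded, then for all $r\ge r_0$, $$\int_r^\infty\rho\Big(\int_{r_0}^u g(v)dv+c\Big)f(u)du\le\Delta+\Delta\ln\frac{\rho\big(\int_{r_0}^\infty g(u)du+c\big)}{\rho\big(\int_{r_0}^r g(u)du+c\big)},$$ where in the bounded case $\rho(\int_{r_0}^\infty g+c)$ is understood as $\lim_{t\to\infty}\rho(t)$ if the integral diverges. *)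

(* Defs.v *)
From HB Require Import structures.
From mathcomp Require Import all_boot all_order all_algebra.
From mathcomp Require Import all_classical all_reals all_analysis.
Set Implicit Arguments. Unset Strict Implicit. Unset Printing Implicit Defensive.
Import Order.TTheory GRing.Theory Num.Theory.
Import numFieldNormedType.Exports.
Local Open Scope classical_set_scope.
Local Open Scope ring_scope.

(* Extension of rho : [0,oo) -> [0,oo) to the extended reals: on finite
   arguments it is rho itself; at +oo it is sup_{t >= 0} rho t, which for a
   non-decreasing rho is lim_{t -> oo} rho t (possibly +oo). The value at -oo
   is never used (all arguments are >= c >= 0). *)
Definition rhoE {R : realType} (rho : R -> R) (x : \bar R) : \bar R :=
  match x with
  | EFin r => (rho r)%:E
  | EPInf => ereal_sup [set (rho t)%:E | t in `[0%R, +oo[]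
  | ENInf => 0%E
  end.

Definition Gint {R : realType} (g : R -> R) (r0 c r : R) : \bar R :=
  (\int[lebesgue_measure]_(u in `[r0, r]) (g u)%:E + c%:E)%E.

Definition Ginf {R : realType} (g : R -> R) (r0 c : R) : \bar R :=
  (\int[lebesgue_measure]_(u in `[r0, +oo[) (g u)%:E + c%:E)%E.

Definition Ftail {R : realType} (f : R -> R) (r : R) : \bar R :=
  (\int[lebesgue_measure]_(u in `[r, +oo[) (f u)%:E)%E.

Definition Delta {R : realType} (rho f g : R -> R) (r0 c beta : R) : \bar R :=
  ereal_sup [set (poweR (rhoE rho (Gint g r0 c r)) (1 + beta) * Ftail f r)%E
            | r in `[r0, +oo[].

Definition tail_int {R : realType} (rho f g : R -> R) (r0 c r : R) : \bar R :=
  (\int[lebesgue_measure]_(u in `[r, +oo[) (rhoE rho (Gint g r0 c u) * (f u)%:E))%E.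

(* Main.v *)
Require Import Defs.
From HB Require Import structures.
From mathcomp Require Import all_boot all_order all_algebra.
From mathcomp Require Import all_classical all_reals all_analysis.
Import Order.TTheory GRing.Theory Num.Theory.
Import numFieldNormedType.Exports.
From mathcomp Require Import ring lra measurable_realfun.
Local Open Scope classical_set_scope.
Local Open Scope ring_scope.


Section calc.
Context {R : realType}.
Local Notation mu := (@lebesgue_measure R).

Lemma powRNy_cvg0 (b : R) : 0 < b -> (x `^ (- b)) @[x --> +oo] --> 0.
Proof.
move=> b0; apply/cvgrPdist_lt => e e0.
near=> x.
rewrite sub0r normrN ger0_norm ?powR_ge0//.
have x0 : 0 < x by near: x; exact: nbhs_pinfty_gt.
have xM : expR (- ln e / b) < x by near: x; exact: nbhs_pinfty_gt.
rewrite /powR gt_eqF// -[ltRHS](@lnK _ e) ?posrE//.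
rewrite ltr_expR mulNr ltrNl -ltr_pdivrMl// mulrC.
rewrite -(@ltr_ln _ (expR _)) ?posrE ?expR_gt0// in xM.
rewrite expRK in xM; apply: le_lt_trans xM; rewrite mulNr; exact: lexx.
Unshelve. all: by end_near. Qed.


Lemma powR_cont (p x : R) : 0 < x -> {for x, continuous (@powR R ^~ p)}.
Proof.
move=> x0; apply: differentiable_continuous; apply/derivable1_diffP.
by apply: derivable_powR; rewrite in_itv/= andbT.
Qed.

Let FF (b : R) := fun x : R => - (x `^ (- b)) / b.

Let FF_derive (b x : R) : 0 < b -> 0 < x ->
  is_derive x 1 (FF b) (x `^ (- (1 + b))).
Proof.
move=> b0 x0.
have h := @is_derive1_powR R (- b) x x0.
rewrite /FF.
have -> : (fun x0 : R => - x0 `^ (- b) / b) = (- b^-1) \*: (@powR R ^~ (- b)).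
  apply/funext => y /=; rewrite /GRing.scale/= mulrC; ring.
have h' := is_deriveZ (- b^-1) h.
apply: (is_derive_eq h').
by rewrite /GRing.scale/= mulrA mulrNN mulVf ?gt_eqF// mul1r opprD addrC.
Qed.

Lemma int_powR (a b : R) : 0 < a -> 0 < b ->
  (\int[mu]_(x in `[a, +oo[) (x `^ (- (1 + b)))%:E = (a `^ (- b) / b)%:E)%E.
Proof.
move=> a0 b0.
rewrite (@ge0_continuous_FTC2y _ _ (FF b) _ 0).
- by rewrite sub0e /FF -EFinN mulNr opprK.
- by move=> x _; exact: powR_ge0.
- apply: continuous_in_subspaceT => x; rewrite inE/= in_itv/= andbT => ax.
  by apply: powR_cont; exact: lt_le_trans ax.
- rewrite /FF -(mul0r b^-1) -oppr0.
  by apply: cvgMr_tmp; apply: cvgN; exact: powRNy_cvg0.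
- by move=> x ax; have [] := FF_derive _ _ b0 (lt_trans a0 ax).
- apply: cvg_at_right_filter.
  have := FF_derive _ _ b0 a0 => /(@ex_derive _ _ _ _ _ _ _) /derivable1_diffP.
  by move/differentiable_continuous.
- move=> x; rewrite in_itv/= andbT => ax.
  by rewrite derive1E; have [_ ->] := FF_derive _ _ b0 (lt_trans a0 ax).
Qed.

Lemma int_inv (a b : R) : 0 < a -> a < b ->
  (\int[mu]_(x in `[a, b]) (x^-1)%:E = (ln b - ln a)%:E)%E.
Proof.
move=> a0 ab.
rewrite (@continuous_FTC2 _ _ (@ln R))//.
- apply: continuous_in_subspaceT => x; rewrite inE/= in_itv/= => /andP[ax _].
  by apply: inv_continuous; rewrite gt_eqF// (lt_le_trans a0 ax).
- split.
  + move=> x; rewrite in_itv/= => /andP[ax _].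
    by have [] := is_derive1_ln (lt_trans a0 ax).
  + by apply: cvg_at_right_filter; exact: continuous_ln.
  + by apply: cvg_at_left_filter; apply: continuous_ln; exact: lt_trans ab.
- move=> x; rewrite in_itv/= => /andP[ax _].
  by rewrite derive1E; have [_ ->] := is_derive1_ln (lt_trans a0 ax).
Qed.

End calc.


Section main.
Context {R : realType}.
Local Notation mu := (@lebesgue_measure R).

Lemma itv_oy_bigcup (s : R) :
  `]s, +oo[%classic = \bigcup_n `[(s + n.+1%:R^-1)%R, +oo[%classic.
Proof.
apply/seteqP; split => [x/=|x [n _ /=]]; rewrite !in_itv/= !andbT.
  move=> sx; exists (Num.truncn (x - s)^-1) => //=; rewrite in_itv/= andbT.
  rewrite -lerBrDl -[leRHS]invrK lef_pV2 ?posrE ?ltr0n ?invr_gt0 ?subr_gt0//.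
  exact/ltW/truncnS_gt.
by apply: lt_le_trans; rewrite ltrDl invr_gt0 ltr0n.
Qed.

Lemma up_int (f : R -> R) (r : R) (A : set R) (B : \bar R) :
  measurable_fun `[r, +oo[ f -> (forall x, r <= x -> 0 <= f x) -> (0 <= B)%E ->
  A `<=` `[r, +oo[ -> (forall u v, A u -> u <= v -> A v) ->
  (forall u, A u -> Ftail f u <= B)%E ->
  (\int[mu]_(x in A) (f x)%:E <= B)%E.
Proof.
move=> mf f0 B0 Ar Aup AB.
case: (pselect (exists a, A a)) => [[a Aa]|nA]; last first.
  have -> : A = set0 by apply/seteqP; split => // x Ax; apply: nA; exists x.
  by rewrite integral_set0.
have lbA : lbound A r by move=> x /Ar; rewrite /= in_itv/= andbT.
set s := inf A.
have rs : r <= s by apply: lb_le_inf => //; exists a.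
have As x : s < x -> A x.
  move=> sx; have [y Ay yx] := inf_lt (ex_intro _ a Aa) sx.
  exact: Aup Ay (ltW yx).
have Asub : A `<=` `[s, +oo[.
  move=> x Ax; rewrite /= in_itv/= andbT; apply: ge_inf => //; by exists r.
have sub_s : `[s, +oo[ `<=` `[r, +oo[ by apply: subset_itvr; rewrite bnd_simp.
have msy : measurable_fun `[s, +oo[ f by exact: measurable_funS mf.
have mA : measurable A.
  apply: is_interval_measurable => x y Ax Ay z /andP[xz zy]; exact: Aup Ax xz.
apply: (@le_trans _ _ (\int[mu]_(x in `[s, +oo[) (f x)%:E))%E.
  apply: ge0_subset_integral => //.
  exact/measurable_EFinP.
  move=> x; rewrite /= in_itv/= andbT => sx; rewrite lee_fin f0//.
  exact: le_trans sx.
rewrite -integral_itv_obnd_cbnd; last first.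
  apply/measurable_EFinP; apply: measurable_funS msy => //.
  by apply: subset_itvr; rewrite bnd_simp.
rewrite itv_oy_bigcup.
have ndF : nondecreasing_seq (fun n => `[(s + n.+1%:R^-1)%R, +oo[%classic : set R).
  move=> n m nm; apply/subsetPset; apply: subset_itvr; rewrite bnd_simp lerD2l.
  by rewrite lef_pV2 ?posrE ?ltr0n// ler_nat.
have sub_n n : `[(s + n.+1%:R^-1)%R, +oo[%classic `<=` `[s, +oo[%classic.
  by apply: subset_itvr; rewrite bnd_simp lerDl invr_ge0.
have cv : (\int[mu]_(x in `[(s + n.+1%:R^-1)%R, +oo[) (f x)%:E)%E @[n --> \oo] -->
    (\int[mu]_(x in \bigcup_n `[(s + n.+1%:R^-1)%R, +oo[%classic) (f x)%:E)%E.
  apply: ge0_nondecreasing_set_cvg_integral => //.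
  - by move=> n; apply/measurable_EFinP; exact: measurable_funS msy.
  - move=> n x hx; rewrite lee_fin f0//.
    by move: (sub_s _ (sub_n n x hx)); rewrite /= in_itv/= andbT.
rewrite -(cvg_lim _ cv) //.
apply: lime_le; first by apply/cvg_ex; eexists; exact: cv.
apply: nearW => n; apply: AB; apply: As.
by rewrite ltrDl invr_gt0 ltr0n.
Qed.


Lemma nd_emeasurable (phi : R -> \bar R) (r : R) :
  (forall x y, r <= x -> x <= y -> (phi x <= phi y)%E) ->
  measurable_fun `[r, +oo[ phi.
Proof.
move=> nd.
move=> mD; apply: (measurability _ (ErealGenOInfty.measurableE R)) => //.
move=> _ [_ [x ->] <-].
apply: is_interval_measurable.
move=> u v [ru pu] [rv pv] z /andP[uz zv]; split.
  by move: ru; rewrite /= !in_itv/= !andbT => ru; exact: le_trans uz.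
move: pu; rewrite /= !in_itv/= !andbT => pu.
apply: (lt_le_trans pu); apply: nd => //.
by move: ru; rewrite /= in_itv/= andbT.
Qed.

Lemma point0 : (point : R) = 0. Proof. by []. Qed.
Lemma epoint0 : (point : \bar R) = 0%E. Proof. by []. Qed.


Lemma layer_cake (phi : R -> \bar R) (f : R -> R) (r : R) :
  measurable_fun `[r, +oo[ f -> (forall x, r <= x -> 0 <= f x) ->
  (forall x, r <= x -> (0 <= phi x)%E) ->
  (forall x y, r <= x -> x <= y -> (phi x <= phi y)%E) ->
  (\int[mu]_(u in `[r, +oo[) (phi u * (f u)%:E) =
   \int[mu]_(t in `[0%R, +oo[)
      \int[mu]_(u in [set u | (r <= u)%R /\ (t%:E < phi u)%E]) (f u)%:E)%E /\
  measurable_fun (`[0%R, +oo[ : set R) (fun t : R =>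
      \int[mu]_(u in [set u | (r <= u)%R /\ (t%:E < phi u)%E]) (f u)%:E)%E.
Proof.
move=> mf f0 phi0 nd.
have mphi := @nd_emeasurable phi r nd.
pose K (p : R * R) : \bar R :=
  if (r <= p.1) && (0 <= p.2) && (p.2%:E < phi p.1)%E then (f p.1)%:E else 0%E.
have K0 p : (0 <= K p)%E.
  by rewrite /K; case: ifPn => // /andP[/andP[h _] _]; rewrite lee_fin f0.
have mK : measurable_fun setT K.
  pose S := (`[r, +oo[ `*` `[0, +oo[) `&`
    [set p : R * R | ((p.2)%:E < (phi \_ `[r,+oo[) p.1)%E].
  have mS : measurable S.
    apply: measurableI; first exact: measurableX.
    rewrite -[X in measurable X]setTI.
    apply: measurable_lte => //.
    - by apply/measurable_EFinP; exact: measurable_snd.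
    - apply: measurableT_comp => //; exact/(measurable_restrictT _ _).1.
  have -> : K = (fun p => ((\1_S p) * ((f \_ `[r,+oo[) p.1))%:E).
    apply/funext => -[u t]; rewrite /K /= indicE !patchE.
    have uD : (u \in `[r, +oo[%classic) = (r <= u) by apply/idP/idP; rewrite in_setE/= in_itv/= andbT.
    have -> : ((u, t) \in S) = [&& r <= u, 0 <= t & (t%:E < phi u)%E].
      apply/idP/idP.
      - rewrite inE => -[[/= + +] /=]; rewrite !in_itv/= !andbT patchE => ru t0.
        by rewrite uD ru t0.
      - move=> /and3P[ru t0 tp]; rewrite inE; split.
          by split => /=; rewrite in_itv/= ?ru ?t0.
        by rewrite /= patchE uD ru.
    rewrite uD; case: (r <= u); case: (0 <= t); case: (t%:E < phi u)%E => /=;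
      by rewrite ?mul1r ?mul0r.
  apply/measurable_EFinP; apply: measurable_funM; first exact: measurable_indic.
  apply: measurableT_comp => //; exact/(measurable_restrictT _ _).1.
have FT := @fubini_tonelli _ _ _ _ _ mu mu K mK K0.
have mT u : measurable [set t : R | 0 <= t /\ (t%:E < phi u)%E].
  apply: is_interval_measurable => t1 t2 [t10 _] [_ t2p] z /andP[t1z zt2].
  split; first exact: le_trans t1z.
  by apply: le_lt_trans t2p; rewrite lee_fin.
have muT u : r <= u -> mu [set t : R | 0 <= t /\ (t%:E < phi u)%E] = phi u.
  move=> ru; have := phi0 u ru; case: (phi u) => [x| |] //= x0.
  - have -> : [set t : R | 0 <= t /\ (t%:E < x%:E)%E] = `[0, x[%classic.
      by apply/seteqP; split => t /=; rewrite in_itv/= lte_fin; [move=> [-> ->]|move=> /andP[-> ->]].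
    rewrite lebesgue_measure_itv/= lte_fin; case: ltP => [_|]; first by rewrite sube0.
    by rewrite lee_fin in x0 => xle; apply/esym; congr EFin; apply/eqP; rewrite eq_le x0 xle.
  - have -> : [set t : R | 0 <= t /\ (t%:E < +oo)%E] = `[0, +oo[%classic.
      by apply/seteqP; split => t /=; rewrite in_itv/= ?ltry; [move=> [-> _]|move=> /andP[-> _]].
    by rewrite lebesgue_measure_itv/= ltry.
have L : (\int[mu]_(u in `[r, +oo[) (phi u * (f u)%:E) =
    \int[mu]_u \int[mu]_t K (u, t))%E.
  rewrite integral_mkcond; apply: eq_integral => u _; rewrite patchE.
  case: ifPn => uD.
  - have ru : r <= u by move: uD; rewrite in_setE/= in_itv/= andbT.
    transitivity (\int[mu]_t ((\1_[set t : R | 0 <= t /\ (t%:E < phi u)%E] t)%:E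
                               * (f u)%:E))%E.
      rewrite ge0_integralZr//; last by rewrite lee_fin f0.
      + rewrite integral_indic//; last exact: mT.
        congr (_ * _)%E; rewrite -[LHS](muT u ru).
        by congr (_ _); apply/seteqP; split => [t At|t [] //].
      + by apply/measurable_EFinP; apply: measurable_indic; exact: mT.
    apply: eq_integral => t _; rewrite /K /= indicE ru /=.
    rewrite (_ : (t \in _) = (0 <= t) && (t%:E < phi u)%E); last first.
      by apply/idP/idP => [/set_mem[/= -> ->]//|/andP[h1 h2]]; apply/mem_set.
    by case: ifPn => _; rewrite ?mul1e ?mul0e.
  - rewrite epoint0; apply/esym; apply: integral0_eq => t _; rewrite /K /=.
    have -> // : r <= u = false.
    by apply/negbTE; apply: contra uD => ru; rewrite in_setE/= in_itv/= andbT.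
have KE t : 0 <= t -> (\int[mu]_u K (u, t) =
    \int[mu]_(u in [set u | (r <= u)%R /\ (t%:E < phi u)%E]) (f u)%:E)%E.
  move=> t0.
  rewrite [RHS]integral_mkcond; apply: eq_integral => u _; rewrite patchE /K /= t0 andbT.
  case: (boolP (u \in _)) => [/set_mem [/= -> ->]//|uA].
  case: ifPn => // /andP[h1 h2]; exfalso; apply: (negP uA); exact: mem_set.
have Rr : (\int[mu]_t \int[mu]_u K (u, t) = \int[mu]_(t in `[0%R, +oo[)
      \int[mu]_(u in [set u | (r <= u)%R /\ (t%:E < phi u)%E]) (f u)%:E)%E.
  rewrite [RHS]integral_mkcond; apply: eq_integral => t _; rewrite patchE.
  case: ifPn => tD.
  - apply: KE; by move: tD; rewrite in_setE/= in_itv/= andbT.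
  - rewrite epoint0; apply: integral0_eq => u _; rewrite /K /=.
    have -> : 0 <= t = false.
      by apply/negbTE; apply: contra tD => t0; rewrite in_setE/= in_itv/= andbT.
    by rewrite andbF.
split; first by rewrite L FT Rr.
have mG := @measurable_fun_fubini_tonelli_G _ _ _ _ _ mu K mK K0.
apply: (@eq_measurable_fun _ _ _ _ _ (fubini_G mu K)).
  by move=> t; rewrite inE/= in_itv/= andbT => t0; rewrite /fubini_G KE.
exact: measurable_funS mG.
Qed.


Lemma int_split (m : R -> \bar R) (a x : R) (bnd : itv_bound R) :
  a <= x -> (BLeft x <= bnd)%O ->
  measurable_fun [set` Interval (BLeft a) bnd] m ->
  (forall t, [set` Interval (BLeft a) bnd] t -> (0 <= m t)%E) ->
  (\int[mu]_(t in [set` Interval (BLeft a) bnd]) m t =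
   \int[mu]_(t in `[a, x[) m t + \int[mu]_(t in [set` Interval (BLeft x) bnd]) m t)%E.
Proof.
move=> ax xb mm m0.
have E : [set` Interval (BLeft a) bnd] = `[a, x[ `|` [set` Interval (BLeft x) bnd].
  by rewrite -itv_bndbnd_setU// bnd_simp.
rewrite E ge0_integral_setU//.
- by rewrite -E.
- by move=> t; rewrite -E; exact: m0.
- apply/disj_setPS => t [] /=; rewrite !in_itv/= => /andP[_ tx].
  case: bnd xb mm m0 E => [b y|[]] //= _ _ _ _; by rewrite ?in_itv/= ?leNgt ?tx.
Qed.


Lemma bound_i (m : R -> \bar R) (x d y b : R) :
  0 < x -> 0 < b -> 0 <= d ->
  measurable_fun (`[0%R, +oo[ : set R) m -> (forall t, 0 <= t -> (0 <= m t)%E) ->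
  (forall t, 0 <= t -> (m t <= y%:E)%E) ->
  (forall t, 0 < t -> (m t <= (d * t `^ (- (1 + b)))%:E)%E) ->
  y * x <= d * x `^ (- b) ->
  (\int[mu]_(t in `[0%R, +oo[) m t <=
     (d * x `^ (- b) + d * (x `^ (- b) / b))%:E)%E.
Proof.
move=> x0 b0 d0 mm m0 my mb yx.
rewrite (@int_split m 0 x +oo%O) //; last 2 first.
  by rewrite ltW.
  by move=> t /=; rewrite in_itv/= andbT; exact: m0.
have mx : measurable_fun (`[x, +oo[ : set R) m.
  by apply: measurable_funS mm => //; apply: subset_itvr; rewrite bnd_simp ltW.
have m0x : measurable_fun (`[0%R, x[ : set R) m.
  by apply: measurable_funS mm => //; apply: subset_itvl; rewrite bnd_simp.
rewrite EFinD; apply: leeD.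
- apply: (@le_trans _ _ (\int[mu]_(t in `[0%R, x[) (cst y%:E) t)%E).
    apply: ge0_le_integral => //.
    + by move=> t /=; rewrite in_itv/= => /andP[t0 _]; exact: m0.
    + by move=> t /=; rewrite in_itv/= => /andP[t0 _]; exact: my.
  rewrite integral_cst//; have := @lebesgue_measure_itv R `[0%R, x[; rewrite /= lte_fin x0 sube0 => ->.
  by rewrite -EFinM lee_fin.
- apply: (@le_trans _ _
    (\int[mu]_(t in `[x, +oo[) (d%:E * (t `^ (- (1 + b)))%:E))%E).
    apply: ge0_le_integral => //.
    + move=> t /=; rewrite in_itv/= andbT => xt; apply: m0.
      exact: le_trans (ltW x0) xt.
    + apply/measurable_EFinP; apply: measurable_funM => //.
      exact: measurable_funS (measurable_powR _).
    + move=> t /=; rewrite in_itv/= andbT => xt; rewrite -EFinM; apply: mb.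
      exact: lt_le_trans x0 xt.
  rewrite ge0_integralZl_EFin//.
  + by rewrite int_powR// -EFinM.
  + by move=> t _; rewrite lee_fin powR_ge0.
  + apply/measurable_EFinP; exact: measurable_funS (measurable_powR _).
Qed.


Lemma bound_ii (m : R -> \bar R) (x y d F : R) :
  0 < x -> x <= y -> 0 <= d ->
  measurable_fun (`[0%R, +oo[ : set R) m -> (forall t, 0 <= t -> (0 <= m t)%E) ->
  (forall t, 0 <= t -> (m t <= F%:E)%E) ->
  (forall t, 0 < t -> (m t <= (d * t `^ (- 1))%:E)%E) ->
  (forall t, y <= t -> m t = 0%E) ->
  F * x <= d ->
  (\int[mu]_(t in `[0%R, +oo[) m t <= (d + d * (ln y - ln x))%:E)%E.
Proof.
move=> x0 xy d0 mm m0 mF mb my Fx.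
rewrite (@int_split m 0 x +oo%O) //; last 2 first.
  by rewrite ltW.
  by move=> t /=; rewrite in_itv/= andbT; exact: m0.
have mx : measurable_fun (`[x, +oo[ : set R) m.
  by apply: measurable_funS mm => //; apply: subset_itvr; rewrite bnd_simp ltW.
have m0x : measurable_fun (`[0%R, x[ : set R) m.
  by apply: measurable_funS mm => //; apply: subset_itvl; rewrite bnd_simp.
rewrite EFinD; apply: leeD.
  apply: (@le_trans _ _ (\int[mu]_(t in `[0%R, x[) (cst F%:E) t)%E).
    apply: ge0_le_integral => //.
    + by move=> t /=; rewrite in_itv/= => /andP[t0 _]; exact: m0.
    + by move=> t /=; rewrite in_itv/= => /andP[t0 _]; exact: mF.
  rewrite integral_cst//; have := @lebesgue_measure_itv R `[0%R, x[.
  by rewrite /= lte_fin x0 sube0 => ->; rewrite -EFinM lee_fin.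
move: xy; rewrite le_eqVlt => /predU1P[xy|xy].
  rewrite -xy subrr mulr0 integral0_eq// => t /=; rewrite in_itv/= andbT => xt.
  by apply: my; rewrite -xy.
rewrite (@int_split m x y +oo%O) //; last 2 first.
  by rewrite ltW.
  by move=> t /=; rewrite in_itv/= andbT => xt; apply: m0; exact: le_trans (ltW x0) xt.
rewrite [X in (_ + X)%E]integral0_eq ?adde0; last first.
  by move=> t /=; rewrite in_itv/= andbT => yt; exact: my.
have mxy : measurable_fun (`[x, y[ : set R) m.
  by apply: measurable_funS mx => //; apply: subset_itvl; rewrite bnd_simp.
have mpw : measurable_fun (`[x, y] : set R) (fun t : R => (d * t `^ (- 1))%:E).
  apply/measurable_EFinP; apply: measurable_funM => //.
  exact: measurable_funS (measurable_powR _).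
apply: (@le_trans _ _ (\int[mu]_(t in `[x, y[) (d * t `^ (- 1))%:E)%E).
  apply: ge0_le_integral => //.
  + by move=> t /=; rewrite in_itv/= => /andP[xt _]; apply: m0; exact: le_trans (ltW x0) xt.
  + by apply: measurable_funS mpw => //; apply: subset_itvl; rewrite bnd_simp.
  + by move=> t /=; rewrite in_itv/= => /andP[xt _]; apply: mb; exact: lt_le_trans x0 xt.
rewrite integral_itv_bndo_bndc; last first.
  by apply: measurable_funS mpw => //; apply: subset_itvl; rewrite bnd_simp.
under eq_integral => t.
  rewrite inE/= in_itv/= => /andP[xt _].
  rewrite powR_inv1; last exact: le_trans (ltW x0) xt.
  rewrite EFinM.
  over.
rewrite /= ge0_integralZl_EFin//.
- by rewrite int_inv// -EFinM.
- move=> t /=; rewrite in_itv/= => /andP[xt _]; rewrite lee_fin invr_ge0.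
  exact: le_trans (ltW x0) xt.
- apply: (@eq_measurable_fun _ _ _ _ _ (fun t => (t `^ (- 1))%:E)).
    move=> t; rewrite inE/= in_itv/= => /andP[xt _].
    by rewrite powR_inv1 //; exact: le_trans (ltW x0) xt.
  apply/measurable_EFinP; exact: measurable_funS (measurable_powR _).
Qed.

End main.


Theorem proposition2p6 (R : realType) (c : R) (rho f g : R -> R) (r0 beta : R) :
  0 <= c ->
  (* rho : [0,oo) -> [0,oo), non-decreasing, differentiable on [0,oo) *)
  (forall x, 0 <= x -> 0 <= rho x) ->
  {in `[0, +oo[ &, {homo rho : x y / x <= y}} ->
  (forall x, 0 < x -> derivable rho x 1) ->
  cvg ((fun h : R => h^-1 * (rho h - rho 0)) @ 0^'+) ->
  (* f, g : [0,oo) -> [0,oo) Borel measurable *)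
  measurable_fun (`[0, +oo[ : set R) f -> measurable_fun (`[0, +oo[ : set R) g ->
  (forall x, 0 <= x -> 0 <= f x) -> (forall x, 0 <= x -> 0 <= g x) ->
  0 <= r0 -> 0 <= beta ->
  (Delta rho f g r0 c beta < +oo)%E ->
  (* (i) *)
  (0 < beta ->
     forall r, r0 <= r ->
       (tail_int rho f g r0 c r <=
        Delta rho f g r0 c beta * ((1 + beta) / beta)%:E *
          inve (poweR (rhoE rho (Gint g r0 c r)) beta))%E)
  /\
  (* (ii) *)
  (beta = 0 ->
     ((\int[lebesgue_measure]_(u in `[r0, +oo[) (g u)%:E < +oo)%E \/
      (exists M : R, forall x, 0 <= x -> rho x <= M)) ->
     forall r, r0 <= r ->
       (0 < rhoE rho (Gint g r0 c r))%E ->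
       (tail_int rho f g r0 c r <=
        Delta rho f g r0 c beta +
        Delta rho f g r0 c beta *
          (ln (fine (rhoE rho (Ginf g r0 c)) / fine (rhoE rho (Gint g r0 c r))))%:E)%E).
Proof.

Proof.
move=> c0 rho0 rhond drho drho0 mf mg f0 g0 r00 beta0 Dlt.
set phi := fun u => rhoE rho (Gint g r0 c u).
set D := Delta rho f g r0 c beta.
have mgs (a b : R) : 0 <= a -> measurable_fun (`[a, b] : set R) g.
  move=> a0; apply: measurable_funS mg => // z; rewrite /= !in_itv/= andbT => /andP[h _].
  exact: le_trans h.
have mgy (a : R) : 0 <= a -> measurable_fun (`[a, +oo[ : set R) g.
  move=> a0; apply: measurable_funS mg => // z; rewrite /= !in_itv/= !andbT => h.
  exact: le_trans h.
have mfy (a : R) : 0 <= a -> measurable_fun (`[a, +oo[ : set R) f.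
  move=> a0; apply: measurable_funS mf => // z; rewrite /= !in_itv/= !andbT => h.
  exact: le_trans h.
have Gint0 u : (0 <= Gint g r0 c u)%E.
  rewrite /Gint; apply: adde_ge0; last by rewrite lee_fin.
  apply: integral_ge0 => v; rewrite /= in_itv/= => /andP[r0v _].
  by rewrite lee_fin g0 // (le_trans r00 r0v).
have Gnd u v : u <= v -> (Gint g r0 c u <= Gint g r0 c v)%E.
  move=> uv; rewrite /Gint; apply: leeD => //.
  apply: ge0_subset_integral => //.
  - by apply/measurable_EFinP; exact: mgs.
  - move=> z; rewrite /= in_itv/= => /andP[r0z _].
    by rewrite lee_fin g0 // (le_trans r00 r0z).
  - by apply: subset_itvl; rewrite bnd_simp.
have GleInf u : (Gint g r0 c u <= Ginf g r0 c)%E.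
  rewrite /Gint /Ginf; apply: leeD => //.
  apply: ge0_subset_integral => //.
  - by apply/measurable_EFinP; exact: mgy.
  - move=> z; rewrite /= in_itv/= andbT => r0z.
    by rewrite lee_fin g0 // (le_trans r00 r0z).
  - by move=> z; rewrite /= !in_itv/= => /andP[-> _].
have rhoSup t : 0 <= t -> ((rho t)%:E <= rhoE rho +oo)%E.
  by move=> t0; apply: ereal_sup_ubound; exists t => //; rewrite /= in_itv/= andbT.
have rhoE0 x : (0 <= x)%E -> (0 <= rhoE rho x)%E.
  case: x => [a| |] //= a0.
  - by rewrite lee_fin rho0 // -lee_fin.
  - by apply: le_trans (rhoSup 0 (lexx _)); rewrite lee_fin rho0.
have rhoEnd x y : (0 <= x)%E -> (x <= y)%E -> (rhoE rho x <= rhoE rho y)%E.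
  case: x => [a| |] //; case: y => [b| |] //= a0 ab.
  - rewrite lee_fin; apply: rhond; rewrite ?in_itv/= ?andbT -?lee_fin//.
    exact: le_trans ab.
  - exact: rhoSup.
have phi0 u : (0 <= phi u)%E by exact: rhoE0.
have phind u v : u <= v -> (phi u <= phi v)%E by move=> uv; exact: rhoEnd (Gnd _ _ uv).
have Dub u : r0 <= u -> (poweR (phi u) (1 + beta) * Ftail f u <= D)%E.
  by move=> r0u; apply: ereal_sup_ubound; exists u => //; rewrite /= in_itv/= andbT.
have Ftail0 u : 0 <= u -> (0 <= Ftail f u)%E.
  move=> u0; apply: integral_ge0 => v; rewrite /= in_itv/= andbT => uv.
  by rewrite lee_fin f0 // (le_trans u0 uv).
have D0 : (0 <= D)%E.
  apply: le_trans (Dub r0 (lexx _)); apply: mule_ge0; first exact: poweR_ge0.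
  exact: Ftail0.
have Dfin : D \is a fin_num by rewrite ge0_fin_numE.
set d := fine D.
have Dd : D = d%:E by rewrite /d fineK.
have d0 : 0 <= d by rewrite -lee_fin -Dd.
have p0 : 0 < 1 + beta by rewrite ltr_wpDr.
have F1 u : r0 <= u -> phi u = +oo%E -> Ftail f u = 0%E.
  move=> r0u pu; have := Dub u r0u; rewrite pu poweRyr ?gt_eqF//.
  have := Ftail0 u (le_trans r00 r0u); rewrite le_eqVlt => /predU1P[<-//|Fu].
  by rewrite gt0_mulye// leye_eq => /eqP Dy; move: Dlt; rewrite -/D Dy ltxx.
have F2 u z : r0 <= u -> phi u = z%:E -> 0 < z ->
    (Ftail f u <= (d / z `^ (1 + beta))%:E)%E.
  move=> r0u pu z0; have := Dub u r0u; rewrite pu poweR_EFin Dd.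
  rewrite -lee_pdivlMl ?powR_gt0// => h; apply: (le_trans h).
  by rewrite -EFinM mulrC.
pose m r t := (\int[lebesgue_measure]_(u in [set u | (r <= u)%R /\ (t%:E < phi u)%E])
                (f u)%:E)%E.
have LC r : r0 <= r -> tail_int rho f g r0 c r =
    (\int[lebesgue_measure]_(t in `[0%R, +oo[) m r t)%E /\
    measurable_fun (`[0%R, +oo[ : set R) (m r).
  move=> r0r; have r0' := le_trans r00 r0r.
  have := @layer_cake R phi f r (mfy r r0') _ (fun x _ => phi0 x) (fun x y _ => phind x y).
  by apply => x rx; apply: f0; exact: le_trans rx.
have mup r t B : r0 <= r -> (0 <= B)%E ->
    (forall u, r <= u -> (t%:E < phi u)%E -> (Ftail f u <= B)%E) -> (m r t <= B)%E.
  move=> r0r B0 hB; have r0' := le_trans r00 r0r.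
  apply: (@up_int R f r) => //.
  - exact: mfy.
  - by move=> x rx; apply: f0; exact: le_trans rx.
  - by move=> u [ru _]; rewrite /= in_itv/= andbT.
  - move=> u v [ru tu] uv; split; first exact: le_trans uv.
    exact: lt_le_trans tu (phind _ _ uv).
  - by move=> u [ru tu]; exact: hB.
have m0 r t : r0 <= r -> (0 <= m r t)%E.
  move=> r0r; apply: integral_ge0 => u [ru _]; rewrite lee_fin f0//.
  exact: le_trans r00 (le_trans r0r ru).
have mF r t : r0 <= r -> (m r t <= Ftail f r)%E.
  move=> r0r; have r0' := le_trans r00 r0r.
  apply: mup => //; first exact: Ftail0.
  move=> u ru _; apply: ge0_subset_integral => //.
  - by apply/measurable_EFinP; exact: mfy.
  - by move=> v; rewrite /= in_itv/= andbT => rv; rewrite lee_fin f0 // (le_trans r0' rv).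
  - by move=> v; rewrite /= !in_itv/= !andbT => uv; exact: le_trans uv.
have mb r t : r0 <= r -> 0 < t -> (m r t <= (d * t `^ (- (1 + beta)))%:E)%E.
  move=> r0r t0; apply: mup => //; first by rewrite lee_fin mulr_ge0 ?powR_ge0.
  move=> u ru; have r0u := le_trans r0r ru.
  case E : (phi u) => [z| |] // tz.
  - have z0 : 0 < z by rewrite -lte_fin (lt_trans _ tz).
    apply: (le_trans (F2 u z r0u E z0)); rewrite lee_fin ler_wpM2l// powRN.
    rewrite lef_pV2 ?posrE ?powR_gt0//; apply: ge0_ler_powR; rewrite ?ltW//.
    + by rewrite nnegrE ltW.
    + by rewrite nnegrE ltW.
  - by rewrite F1 // lee_fin mulr_ge0 ?powR_ge0.
have mzero r t : r0 <= r -> 0 <= t -> d = 0 -> m r t = 0%E.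
  move=> r0r t0 dd; apply/eqP; rewrite eq_le m0 // andbT.
  apply: mup => // u ru; have r0u := le_trans r0r ru.
  case E : (phi u) => [z| |] // tz.
  - have z0 : 0 < z by rewrite -lte_fin (le_lt_trans _ tz).
    by apply: (le_trans (F2 u z r0u E z0)); rewrite dd mul0r.
  - by rewrite F1.
have mint0 r : r0 <= r -> (forall t, 0 <= t -> m r t = 0%E) ->
    (\int[lebesgue_measure]_(t in `[0%R, +oo[) m r t = 0)%E.
  move=> r0r h; apply: integral0_eq => t; rewrite /= in_itv/= andbT; exact: h.
split.
- move=> b0 r r0r.
  have [LCe mm] := LC r r0r; rewrite LCe.
  have r0' := le_trans r00 r0r.
  have bn0 : beta != 0 by rewrite gt_eqF.
  case E : (rhoE rho (Gint g r0 c r)) => [x| |]; last 2 first.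
  + have Fr := F1 r r0r E.
    rewrite mint0 // ?poweRyr // ?invey ?mule0 // => t t0.
    by apply/eqP; rewrite eq_le m0 // andbT -Fr mF.
  + by have := phi0 r; rewrite /phi E.
  have x0 : 0 <= x by rewrite -lee_fin -E phi0.
  move: x0; rewrite le_eqVlt => /predU1P[x0|x0].
    rewrite -x0 poweR_EFin powR0 // inve0.
    move: d0; rewrite le_eqVlt => /predU1P[d0|d0].
      rewrite Dd -d0 !mul0e mint0 // => t t0; exact: mzero.
    by rewrite gt0_muley ?leey // Dd -EFinM lte_fin mulr_gt0 // divr_gt0.
  have Fx := F2 r x r0r E x0.
  have Ffin : Ftail f r \is a fin_num.
    by rewrite ge0_fin_numE ?Ftail0 // (le_lt_trans Fx) ?ltry.
  set y := fine (Ftail f r).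
  have Fy : Ftail f r = y%:E by rewrite /y fineK.
  have yx : y * x <= d * x `^ (- beta).
    have -> : d * x `^ (- beta) = d / x `^ (1 + beta) * x.
      rewrite powRD ?gt_eqF ?implybT // powRr1 ?ltW // powRN.
      field; rewrite ?gt_eqF ?powR_gt0 //.
    by apply: ler_wpM2r; [exact: ltW | rewrite -lee_fin -Fy].
  apply: (le_trans (@bound_i R (m r) x d y beta x0 b0 d0 mm _ _ _ yx)).
  + by move=> t _; exact: m0.
  + by move=> t _; rewrite -Fy; exact: mF.
  + by move=> t t0; exact: mb.
  rewrite poweR_EFin inver gt_eqF ?powR_gt0 // Dd -!EFinM lee_fin powRN.
  rewrite le_eqVlt; apply/orP; left; apply/eqP.
  field; rewrite ?gt_eqF ?powR_gt0 //.
- move=> b0 hyp r r0r phipos.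
  have [LCe mm] := LC r r0r; rewrite LCe.
  have r0' := le_trans r00 r0r.
  have Ginf0 : (0 <= Ginf g r0 c)%E := le_trans (Gint0 r0) (GleInf r0).
  have bfin : rhoE rho (Ginf g r0 c) \is a fin_num.
    rewrite ge0_fin_numE; last exact: rhoE0.
    case: hyp => [gfin | [M hM]].
    + have : (Ginf g r0 c < +oo)%E by rewrite /Ginf lte_add_pinfty // ltry.
      by case: (Ginf g r0 c) Ginf0 => [z| |] //= _ _; rewrite ltry.
    + apply: (@le_lt_trans _ _ M%:E); last exact: ltry.
      case: (Ginf g r0 c) Ginf0 => [z| |] //= z0.
      * by rewrite lee_fin hM // -lee_fin.
      * by apply: ge_ereal_sup => _ [t t0 <-]; rewrite lee_fin hM //;
          move: t0; rewrite /= in_itv/= andbT.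
  set y := fine (rhoE rho (Ginf g r0 c)).
  have Ey : rhoE rho (Ginf g r0 c) = y%:E by rewrite /y fineK.
  have phiy u : (phi u <= y%:E)%E by rewrite -Ey; exact: rhoEnd (Gint0 u) (GleInf u).
  move: phipos (phiy r); rewrite /phi /=.
  case E : (rhoE rho (Gint g r0 c r)) => [x| |] //; rewrite ?lte_fin ?lee_fin => x0 xy.
  rewrite /=.
  have Fx := F2 r x r0r E x0.
  rewrite b0 addr0 powRr1 in Fx; last exact: ltW x0.
  have Ffin : Ftail f r \is a fin_num.
    by rewrite ge0_fin_numE ?Ftail0 // (le_lt_trans Fx) ?ltry.
  set F := fine (Ftail f r).
  have FF : Ftail f r = F%:E by rewrite /F fineK.
  have Fxd : F * x <= d.
    have -> : d = d / x * x by rewrite divfK // gt_eqF.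
    apply: ler_wpM2r; first exact: ltW.
    by rewrite -lee_fin -FF.
  apply: (le_trans (@bound_ii R (m r) x y d F x0 xy d0 mm _ _ _ _ Fxd)).
  + by move=> t _; exact: m0.
  + by move=> t _; rewrite -FF; exact: mF.
  + by move=> t t0; have := mb r t r0r t0; rewrite b0 addr0.
  + move=> t yt; rewrite /m.
    have -> : [set u | (r <= u)%R /\ (t%:E < phi u)%E] = set0.
      apply/seteqP; split => // u [ru tu].
      have := lt_le_trans tu (phiy u); rewrite lte_fin => ty.
      by move: (lt_le_trans ty yt); rewrite ltxx.
    by rewrite integral_set0.
  rewrite Dd ln_div ?posrE ?(lt_le_trans x0) // -EFinM -EFinD.
Qed.
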